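(* Suppose Assumptions A and B hold. Suppose moreover that for every $(\hat x,\hat t)\in\mathcal D_{\mathrm{SDP}}$ with $\mathcal F(\hat x)$ semidefinite, $(\hat x,\hat t)$ can be written as a convex combination of finitely many points $(x_\alpha,t_\alpha)\in\mathcal D_{\mathrm{SDP}}$ with $\operatorname{affdim}(\mathcal F(x_\alpha))>\operatorname{affdim}(\mathcal F(\hat x))$ for each $\alpha$. Then $\operatorname{conv}(\mathcal D)=\mathcal D_{\mathrm{SDP}}$ and $\mathrm{Opt}=\mathrm{Opt}_{\mathrm{SDP}}$.
   Context: Fix integers $N\ge 1$, $m_I,m_E\ge 0$, $m:=m_I+m_E\ge 1$; $[a,b]=\{a,\dots,b\}$, $[n]=[1,n]$. For $i\in[0,m]$ let $q_i(x)=x^\top A_ix+2b_i^\top x+c_i$ with $A_i\in\mathbb S^N$, $b_i\in\mathbb R^N$, $c_i\in\mathbb R$. $\mathrm{Opt}:=\inf\{q_0(x): q_i(x)\le 0\ \forall i\in[m_I],\ q_i(x)=0\ \forall i\in[m_I+1,m]\}$ and $\mathcal D:=\{(x,t)\in\mathbb R^N\times\mathbb R: q_0(x)\le 2t,\ q_i(x)\le0\ \forall i\in[m_I],\ q_i(x)=0\ \forall i\in[m_I+1,m]\}$. Let $Q_i=\begin{pmatrix}c_i& b_i^\top\\ b_i& A_i\end{pmatrix}$; $\mathrm{Opt}_{\mathrm{SDP}}:=\inf\{\langle Q_0,Y\rangle: Y=\begin{pmatrix}1&x^\top\\ x& X\end{pmatrix}\succeq 0,\ X\in\mathbb S^N,\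 \langle Q_i,Y\rangle\le 0\ \forall i\in[m_I],\ \langle Q_i,Y\rangle=0\ \forall i\in[m_I+1,m]\}$ and $\mathcal D_{\mathrm{SDP}}:=\{(x,t):\exists X\in\mathbb S^N$ with $Y=\begin{pmatrix}1&x^\top\\ x& X\end{pmatrix}\succeq0$, $\langle Q_0,Y\rangle\le 2t$, and the same constraints$\}$. For $\gamma\in\mathbb R^m$, $A(\gamma)=A_0+\sum\gamma_iA_i$, $q(\gamma,x)=q_0(x)+\sum\gamma_iq_i(x)$, $\Gamma:=\{\gamma: A(\gamma)\succeq0,\ \gamma_i\ge0\ \forall i\in[m_I]\}$. Assumption A: the QCQP is feasible and some $\gamma^*$ with $\gamma^*_i\ge0$ ($i\in[m_I]$) has $A(\gamma^* )\succ0$. Assumption B: for every $\hat x$, if $\sup_{\gamma\in\Gamma}q(\gamma,\hat x)$ is finite it is attained. Then $\mathcal F(\hat x):=\arg\max_{\gamma\in\Gamma}q(\gamma,\hat x)$, a nonempty face of $\Gamma$, defined whenever the supremum is finite (in particular for $(\hat x,\hat t)\in\mathcal D_{\mathrm{SDP}}$). A nonempty face is definite if it contains $\gamma$ with $A(\gamma)\succ0$, semidefinite otherwise. $\operatorname{affdim}$ denotes the dimension of the affine hull. *)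

(* Defs.v *)
From Stdlib Require Import Reals List.
Import ListNotations.
Open Scope R_scope.

Fixpoint rsum (n : nat) (f : nat -> R) : R :=
  match n with O => 0 | S k => rsum k f + f k end.
Definition rsum1 (m : nat) (f : nat -> R) : R := rsum m (fun i => f (S i)).
Definition lsum {A : Type} (f : A -> R) (l : list A) : R :=
  fold_right (fun a acc => f a + acc) 0 l.

(* vectors / matrices: only indices below the dimension are meaningful *)
Definition vec := nat -> R.
Definition mat := nat -> nat -> R.

Definition quadf (n : nat) (M : mat) (v : vec) : R :=
  rsum n (fun i => rsum n (fun j => v i * M i j * v j)).
Definition symm (n : nat) (M : mat) : Prop :=
  forall i j, (i < n)%nat -> (j < n)%nat -> M i j = M j i.
Definition psd (n : nat) (M : mat) : Prop :=
  symm n M /\ forall v : vec, 0 <= quadf n M v.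
Definition pd (n : nat) (M : mat) : Prop :=
  symm n M /\ forall v : vec, (exists i, (i < n)%nat /\ v i <> 0) -> 0 < quadf n M v.
Definition frob (n : nat) (M Y : mat) : R :=
  rsum n (fun r => rsum n (fun s => M r s * Y r s)).

(* QCQP data: q_i(x) = x^T A_i x + 2 b_i^T x + c_i, i in [0, mI+mE] *)
Record qcqp := Qcqp {
  dimN : nat; mI : nat; mE : nat;
  Am : nat -> mat; bv : nat -> vec; cs : nat -> R }.

Section Q.
Variable P : qcqp.
Let N := dimN P.
Definition mm : nat := (mI P + mE P)%nat.

Definition qf (i : nat) (x : vec) : R :=
  quadf N (Am P i) x + 2 * rsum N (fun j => bv P i j * x j) + cs P i.

Definition feasible (x : vec) : Prop :=
  (forall i, (1 <= i <= mI P)%nat -> qf i x <= 0) /\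
  (forall i, (mI P + 1 <= i <= mm)%nat -> qf i x = 0).

Definition inD (x : vec) (t : R) : Prop := qf 0 x <= 2 * t /\ feasible x.

Definition Qmat (i : nat) : mat := fun r s =>
  match r, s with
  | O, O => cs P i
  | O, S l => bv P i l
  | S k, O => bv P i k
  | S k, S l => Am P i k l
  end.
Definition Ymat (x : vec) (X : mat) : mat := fun r s =>
  match r, s with
  | O, O => 1
  | O, S l => x l
  | S k, O => x k
  | S k, S l => X k l
  end.

Definition sdp_feasible (x : vec) (X : mat) : Prop :=
  symm N X /\ psd (N + 1) (Ymat x X) /\
  (forall i, (1 <= i <= mI P)%nat -> frob (N + 1) (Qmat i) (Ymat x X) <= 0) /\
  (forall i, (mI P + 1 <= i <= mm)%nat -> frob (N + 1) (Qmat i) (Ymat x X) = 0).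

Definition inDSDP (x : vec) (t : R) : Prop :=
  exists X : mat, sdp_feasible x X /\ frob (N + 1) (Qmat 0) (Ymat x X) <= 2 * t.

(* objective value sets whose infima are Opt and Opt_SDP *)
Definition OptSet (s : R) : Prop := exists x, feasible x /\ s = qf 0 x.
Definition SDPSet (s : R) : Prop :=
  exists x X, sdp_feasible x X /\ s = frob (N + 1) (Qmat 0) (Ymat x X).

(* Lagrangian side; gamma : nat -> R, only indices in [1,m] matter *)
Definition Amat (g : vec) : mat := fun r s =>
  Am P 0 r s + rsum1 mm (fun i => g i * Am P i r s).
Definition inGamma (g : vec) : Prop :=
  psd N (Amat g) /\ forall i, (1 <= i <= mI P)%nat -> 0 <= g i.
Definition qg (g : vec) (x : vec) : R := qf 0 x + rsum1 mm (fun i => g i * qf i x).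

Definition inF (x : vec) (g : vec) : Prop :=
  inGamma g /\ forall g', inGamma g' -> qg g' x <= qg g x.

Definition AssumptionA : Prop :=
  (exists x, feasible x) /\
  (exists g, (forall i, (1 <= i <= mI P)%nat -> 0 <= g i) /\ pd N (Amat g)).

Definition AssumptionB : Prop :=
  forall xh : vec, (exists M, forall g, inGamma g -> qg g xh <= M) ->
    exists g, inF xh g.

Definition semidef_face (x : vec) : Prop :=
  (exists g, inF x g) /\ forall g, inF x g -> ~ pd N (Amat g).
End Q.

(* Affine independence of p0, p_1..p_k in R^m (coordinates 1..m) *)
Definition aff_indep (m : nat) (p0 : vec) (ps : list vec) : Prop :=
  forall l : nat -> R,
    (forall j, (1 <= j <= m)%nat ->
       rsum (length ps) (fun k => l k * (nth k ps p0 j - p0 j)) = 0) ->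
    forall k, (k < length ps)%nat -> l k = 0.
Definition has_aff_indep (m : nat) (S : vec -> Prop) (d : nat) : Prop :=
  exists p0 ps, length ps = d /\ S p0 /\ Forall S ps /\ aff_indep m p0 ps.
Definition AffDim (m : nat) (S : vec -> Prop) (d : nat) : Prop :=
  has_aff_indep m S d /\ ~ has_aff_indep m S (Datatypes.S d).

Definition affdim_gt (P : qcqp) (x xh : vec) : Prop :=
  exists d1 d2, AffDim (mm P) (inF P x) d1 /\ AffDim (mm P) (inF P xh) d2 /\ (d2 < d1)%nat.

Definition in_conv (n : nat) (S : vec -> R -> Prop) (x : vec) (t : R) : Prop :=
  exists l : list (R * (vec * R)),
    Forall (fun a => 0 <= fst a /\ S (fst (snd a)) (snd (snd a))) l /\
    lsum (fun a => fst a) l = 1 /\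
    (forall j, (j < n)%nat -> x j = lsum (fun a => fst a * fst (snd a) j) l) /\
    t = lsum (fun a => fst a * snd (snd a)) l.

Inductive xR := Fin (r : R) | PInf | NInf.
Definition IsInf (S : R -> Prop) (v : xR) : Prop :=
  match v with
  | Fin r => (forall s, S s -> r <= s) /\
             (forall r', (forall s, S s -> r' <= s) -> r' <= r)
  | NInf => forall r, exists s, S s /\ s < r
  | PInf => forall s, ~ S s
  end.

(* Main.v *)
Require Import Defs.
From Stdlib Require Import Reals List.
From Stdlib Require Import Lra Lia Psatz Classical.
Open Scope R_scope.

Lemma rsum_ext n f g : (forall i, (i < n)%nat -> f i = g i) -> rsum n f = rsum n g.
Proof. induction n; simpl; intros H; [reflexivity|].
  rewrite IHn by (intros; apply H; lia). rewrite H by lia. reflexivity. Qed.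

Lemma rsum_plus n f g : rsum n (fun i => f i + g i) = rsum n f + rsum n g.
Proof. induction n; simpl; [lra|]. rewrite IHn. lra. Qed.

Lemma rsum_scal n c f : rsum n (fun i => c * f i) = c * rsum n f.
Proof. induction n; simpl; [lra|]. rewrite IHn. lra. Qed.

Lemma rsum_opp n f : rsum n (fun i => - f i) = - rsum n f.
Proof. induction n; simpl; [lra|]. rewrite IHn. lra. Qed.

Lemma rsum_zero n f : (forall i, (i<n)%nat -> f i = 0) -> rsum n f = 0.
Proof. induction n; simpl; intros H; [lra|]. rewrite IHn by (intros; apply H; lia).
  rewrite H by lia. lra. Qed.

Lemma rsum_le n f g : (forall i, (i<n)%nat -> f i <= g i) -> rsum n f <= rsum n g.
Proof. induction n; simpl; intros H; [lra|].
  assert (rsum n f <= rsum n g) by (apply IHn; intros; apply H; lia).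
  assert (f n <= g n) by (apply H; lia). lra. Qed.

Lemma rsum_nonneg n f : (forall i, (i<n)%nat -> 0 <= f i) -> 0 <= rsum n f.
Proof. intros H. replace 0 with (rsum n (fun _ => 0)). apply rsum_le; auto.
  apply rsum_zero; auto. Qed.

Lemma rsum_shift n f : rsum (S n) f = f 0%nat + rsum n (fun i => f (S i)).
Proof. induction n; simpl. lra. simpl in IHn. rewrite IHn. lra. Qed.

Lemma rsum_comm n m (f : nat -> nat -> R) :
  rsum n (fun i => rsum m (fun j => f i j)) = rsum m (fun j => rsum n (fun i => f i j)).
Proof. induction n; simpl.
  - symmetry. apply rsum_zero. auto.
  - rewrite IHn. rewrite <- rsum_plus. reflexivity. Qed.

Lemma rsum_point n f p : (p < n)%nat -> (forall i, (i<n)%nat -> i <> p -> f i = 0) ->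
  rsum n f = f p.
Proof. induction n; intros Hp H; [lia|]. simpl.
  destruct (Nat.eq_dec p n).
  - subst. rewrite rsum_zero. lra. intros; apply H; lia.
  - rewrite IHn by (try lia; intros; apply H; lia). rewrite (H n) by lia. lra. Qed.

Lemma rsum_update n f g p d : (p < n)%nat ->
  (forall k, (k<n)%nat -> k <> p -> g k = f k) -> g p = f p + d ->
  rsum n g = rsum n f + d.
Proof. intros Hp H Hg.
  assert (rsum n (fun k => g k + - f k) = d).
  { rewrite (rsum_point _ _ p); auto. rewrite Hg; lra.
    intros i Hi Hne. rewrite H; auto; lra. }
  rewrite rsum_plus, rsum_opp in H0. lra. Qed.

Lemma rsum_prod n m a b :
  rsum n (fun i => rsum m (fun j => a i * b j)) = rsum n a * rsum m b.
Proof. rewrite (rsum_ext n _ (fun i => rsum m b * a i)).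
  - rewrite rsum_scal. lra.
  - intros. rewrite rsum_scal. lra. Qed.

Lemma rsum_ge_term n f p : (p < n)%nat -> (forall i, (i<n)%nat -> 0 <= f i) -> f p <= rsum n f.
Proof. induction n; intros Hp H; [lia|]. simpl.
  destruct (Nat.eq_dec p n).
  - subst. assert (0 <= rsum n f) by (apply rsum_nonneg; intros; apply H; lia). lra.
  - assert (f p <= rsum n f) by (apply IHn; [lia| intros; apply H; lia]).
    assert (0 <= f n) by (apply H; lia). lra. Qed.

Lemma quadf_ext n M M' v : (forall r s, (r<n)%nat -> (s<n)%nat -> M r s = M' r s) ->
  quadf n M v = quadf n M' v.
Proof. intros H. unfold quadf. apply rsum_ext; intros. apply rsum_ext; intros.
  rewrite H; auto. Qed.

Lemma quadf_extv n M v v' : (forall i, (i<n)%nat -> v i = v' i) ->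
  quadf n M v = quadf n M v'.
Proof. intros H. unfold quadf. apply rsum_ext; intros. apply rsum_ext; intros.
  rewrite !H; auto. Qed.

Lemma frob_ext n A A' B B' : (forall r s, (r<n)%nat -> (s<n)%nat -> A r s = A' r s /\ B r s = B' r s) ->
  frob n A B = frob n A' B'.
Proof. intros H. unfold frob. apply rsum_ext; intros. apply rsum_ext; intros.
  destruct (H i i0); auto. rewrite H2, H3; auto. Qed.

Lemma quadf_lin n M M' c v :
  quadf n (fun r s => M r s + c * M' r s) v = quadf n M v + c * quadf n M' v.
Proof. unfold quadf. rewrite <- rsum_scal, <- rsum_plus. apply rsum_ext; intros.
  rewrite <- rsum_scal, <- rsum_plus. apply rsum_ext; intros. ring. Qed.

Lemma frob_lin1 n M M' c B :
  frob n (fun r s => M r s + c * M' r s) B = frob n M B + c * frob n M' B.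
Proof. unfold frob. rewrite <- rsum_scal, <- rsum_plus. apply rsum_ext; intros.
  rewrite <- rsum_scal, <- rsum_plus. apply rsum_ext; intros. ring. Qed.

Lemma frob_lin2 n A M M' c :
  frob n A (fun r s => c * M r s + M' r s) = c * frob n A M + frob n A M'.
Proof. unfold frob. rewrite <- rsum_scal, <- rsum_plus. apply rsum_ext; intros.
  rewrite <- rsum_scal, <- rsum_plus. apply rsum_ext; intros. ring. Qed.

Lemma quadf_S n M v : quadf (S n) M v = quadf n M v
  + rsum n (fun i => v i * M i n * v n) + rsum n (fun j => v n * M n j * v j)
  + v n * M n n * v n.
Proof. unfold quadf. cbn [rsum]. rewrite rsum_plus. lra. Qed.

Lemma frob_S n A B : frob (S n) A B = frob n A B
  + rsum n (fun r => A r n * B r n) + rsum n (fun s => A n s * B n s) + A n n * B n n.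
Proof. unfold frob. cbn [rsum]. rewrite rsum_plus. lra. Qed.

Lemma quadf_shift n M v : quadf (S n) M v =
  v 0%nat * M 0%nat 0%nat * v 0%nat + rsum n (fun l => v 0%nat * M 0%nat (S l) * v (S l))
  + rsum n (fun k => v (S k) * M (S k) 0%nat * v 0%nat)
  + quadf n (fun k l => M (S k) (S l)) (fun k => v (S k)).
Proof. unfold quadf.
  rewrite (rsum_shift n (fun i => rsum (S n) (fun j => v i * M i j * v j))).
  rewrite (rsum_shift n (fun j => v 0%nat * M 0%nat j * v j)).
  rewrite (rsum_ext n (fun i => rsum (S n) (fun j => v (S i) * M (S i) j * v j)) (fun k => v (S k) * M (S k) 0%nat * v 0%nat +
      rsum n (fun l => v (S k) * M (S k) (S l) * v (S l)))).
  - rewrite rsum_plus. lra.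
  - intros. rewrite rsum_shift. reflexivity. Qed.

Lemma frob_shift n A B : frob (S n) A B =
  A 0%nat 0%nat * B 0%nat 0%nat + rsum n (fun l => A 0%nat (S l) * B 0%nat (S l))
  + rsum n (fun k => A (S k) 0%nat * B (S k) 0%nat)
  + frob n (fun k l => A (S k) (S l)) (fun k l => B (S k) (S l)).
Proof. unfold frob.
  rewrite (rsum_shift n (fun r => rsum (S n) (fun s => A r s * B r s))).
  rewrite (rsum_shift n (fun s => A 0%nat s * B 0%nat s)).
  rewrite (rsum_ext n (fun r => rsum (S n) (fun s => A (S r) s * B (S r) s)) (fun k => A (S k) 0%nat * B (S k) 0%nat +
      rsum n (fun l => A (S k) (S l) * B (S k) (S l)))).
  - rewrite rsum_plus. lra.
  - intros. rewrite rsum_shift. reflexivity. Qed.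

Lemma quadf_zero_v n M : quadf n M (fun _ => 0) = 0.
Proof. unfold quadf. apply rsum_zero; intros. apply rsum_zero; intros. ring. Qed.

Lemma quadf_S_symm n A v : symm (S n) A ->
  quadf (S n) A v = quadf n A v + 2 * v n * rsum n (fun j => A n j * v j) + A n n * v n * v n.
Proof. intros Hs. rewrite quadf_S.
  rewrite (rsum_ext n (fun i => v i * A i n * v n) (fun j => v n * (A n j * v j))).
  2:{ intros. rewrite Hs by lia. ring. }
  rewrite (rsum_ext n (fun j => v n * A n j * v j) (fun j => v n * (A n j * v j))).
  2:{ intros. ring. }
  rewrite rsum_scal. ring. Qed.

Definition schur (A : mat) (n : nat) : mat := fun r s => A r s + (- / A n n) * (A n r * A n s).

Lemma quadf_schur n A v :
  quadf n (schur A n) v = quadf n A v + (- / A n n) * (rsum n (fun j => A n j * v j) * rsum n (fun j => A n j * v j)).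
Proof. unfold schur. rewrite quadf_lin. f_equal. f_equal. unfold quadf.
  rewrite <- rsum_prod. apply rsum_ext; intros. apply rsum_ext; intros. ring. Qed.

Lemma schur_symm n A : symm (S n) A -> symm n (schur A n).
Proof. intros H r s Hr Hs. unfold schur. rewrite H by lia. ring. Qed.

Lemma psd_restrict n B : psd (S n) B -> psd n B.
Proof. intros [Hs Hq]. split.
  - intros r s Hr Hs'. apply Hs; lia.
  - intros v. set (w := fun i => if (i <? n)%nat then v i else 0).
    specialize (Hq w). rewrite quadf_S in Hq.
    assert (Hwn : w n = 0) by (unfold w; rewrite Nat.ltb_irrefl; reflexivity).
    rewrite Hwn in Hq.
    rewrite (rsum_zero n (fun i => w i * B i n * 0)) in Hq by (intros; ring).
    rewrite (rsum_zero n (fun j => 0 * B n j * w j)) in Hq by (intros; ring).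
    rewrite (quadf_extv n B w v) in Hq. lra.
    intros i Hi. unfold w. apply Nat.ltb_lt in Hi. rewrite Hi. reflexivity. Qed.

Lemma frob_outer n B u : frob n (fun r s => u r * u s) B = quadf n B u.
Proof. unfold frob, quadf. apply rsum_ext; intros. apply rsum_ext; intros. ring. Qed.

Lemma fejer_step n (IH : forall A B, psd n A -> psd n B -> 0 <= frob n A B) A B :
  psd (S n) A -> psd (S n) B -> 0 < A n n -> 0 <= frob (S n) A B.
Proof. intros [HsA HqA] HB Ha.
  assert (Hdec : frob (S n) A B = frob (S n) (schur A n) B + / A n n * quadf (S n) B (fun i => A n i)).
  { rewrite <- frob_outer. rewrite <- frob_lin1. apply frob_ext. intros r s _ _. split; auto.
    unfold schur. field. lra. }
  assert (Hz : frob (S n) (schur A n) B = frob n (schur A n) B).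
  { rewrite frob_S. unfold schur.
    rewrite (rsum_zero n (fun r => (A r n + - / A n n * (A n r * A n n)) * B r n)).
    rewrite (rsum_zero n (fun s => (A n s + - / A n n * (A n n * A n s)) * B n s)).
    field_simplify; lra.
    intros. field_simplify; lra.
    intros. rewrite (HsA i n) by lia. field_simplify; lra. }
  assert (HpA' : psd n (schur A n)).
  { split. apply schur_symm; auto.
    intros v. set (s := rsum n (fun j => A n j * v j)).
    set (w := fun i => if (i <? n)%nat then v i else - s / A n n).
    specialize (HqA w). rewrite quadf_S_symm in HqA by auto.
    assert (Hwn : w n = - s / A n n) by (unfold w; rewrite Nat.ltb_irrefl; reflexivity).
    assert (Hwv : forall i, (i < n)%nat -> w i = v i).
    { intros i Hi. unfold w. apply Nat.ltb_lt in Hi. rewrite Hi. reflexivity. }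
    rewrite (quadf_extv n A w v Hwv) in HqA.
    rewrite (rsum_ext n (fun j => A n j * w j) (fun j => A n j * v j)) in HqA
      by (intros; rewrite Hwv; auto).
    rewrite quadf_schur. fold s. fold s in HqA. rewrite Hwn in HqA.
    assert (HH: 2 * (- s / A n n) * s + A n n * (- s / A n n) * (- s / A n n) = - / A n n * (s * s))
      by (field; lra). lra. }
  rewrite Hdec, Hz.
  assert (0 <= frob n (schur A n) B) by (apply IH; auto; apply psd_restrict; auto).
  assert (0 <= quadf (S n) B (fun i => A n i)) by (apply HB).
  assert (0 <= / A n n) by (left; apply Rinv_0_lt_compat; auto).
  nra. Qed.

Definition Enn (n : nat) : mat := fun r s => if (Nat.eqb r n && Nat.eqb s n)%bool then 1 else 0.

Lemma Enn_small n r s : (r < n)%nat \/ (s < n)%nat -> Enn n r s = 0.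
Proof. intros H. unfold Enn. destruct H as [H|H].
  - assert (r <> n) by lia. apply Nat.eqb_neq in H0. rewrite H0. reflexivity.
  - assert (s <> n) by lia. apply Nat.eqb_neq in H0. rewrite H0.
    rewrite Bool.andb_false_r. reflexivity. Qed.

Lemma Enn_nn n : Enn n n n = 1.
Proof. unfold Enn. rewrite Nat.eqb_refl. reflexivity. Qed.

Lemma quadf_Enn n v : quadf (S n) (Enn n) v = v n * v n.
Proof. rewrite quadf_S. rewrite Enn_nn.
  rewrite (quadf_ext n (Enn n) (fun _ _ => 0)) by (intros; apply Enn_small; lia).
  assert (quadf n (fun _ _ => 0) v = 0) by (unfold quadf; apply rsum_zero; intros; apply rsum_zero; intros; ring).
  rewrite (rsum_zero n (fun i => v i * Enn n i n * v n)) by (intros; rewrite Enn_small by lia; ring).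
  rewrite (rsum_zero n (fun j => v n * Enn n n j * v j)) by (intros; rewrite Enn_small by lia; ring).
  lra. Qed.

Lemma frob_Enn n B : frob (S n) (Enn n) B = B n n.
Proof. rewrite frob_S. rewrite Enn_nn.
  rewrite (frob_ext n (Enn n) (fun _ _ => 0) B B) by (intros; split; auto; apply Enn_small; lia).
  assert (frob n (fun _ _ => 0) B = 0) by (unfold frob; apply rsum_zero; intros; apply rsum_zero; intros; ring).
  rewrite (rsum_zero n (fun r => Enn n r n * B r n)) by (intros; rewrite Enn_small by lia; ring).
  rewrite (rsum_zero n (fun s => Enn n n s * B n s)) by (intros; rewrite Enn_small by lia; ring).
  lra. Qed.

Lemma fejer n : forall A B, psd n A -> psd n B -> 0 <= frob n A B.
Proof. induction n; intros A B HA HB.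
  - unfold frob. simpl. lra.
  - assert (Heps : forall e, 0 < e -> 0 <= frob (S n) A B + e * B n n).
    { intros e He. rewrite <- (frob_Enn n B), <- frob_lin1.
      apply fejer_step; auto.
      + destruct HA as [HsA HqA]. split.
        * intros r s Hr Hs. rewrite HsA by auto. unfold Enn.
          destruct (Nat.eqb r n), (Nat.eqb s n); reflexivity.
        * intros v. rewrite quadf_lin, quadf_Enn. specialize (HqA v). nra.
      + rewrite Enn_nn. destruct HA as [_ HqA].
        assert (0 <= A n n).
        { specialize (HqA (fun i => if Nat.eqb i n then 1 else 0)).
          rewrite quadf_S in HqA. rewrite Nat.eqb_refl in HqA.
          rewrite (quadf_extv n A _ (fun _ => 0)) in HqA.
          rewrite quadf_zero_v in HqA.
          rewrite (rsum_zero n (fun i => (if Nat.eqb i n then 1 else 0) * A i n * 1)) in HqA.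
          rewrite (rsum_zero n (fun j => 1 * A n j * (if Nat.eqb j n then 1 else 0))) in HqA.
          lra.
          all: intros i Hi; assert (Hne : i <> n) by lia; apply Nat.eqb_neq in Hne; rewrite Hne; ring. }
        lra. }
    set (F := frob (S n) A B) in *. set (b := B n n) in *.
    destruct (Rle_or_lt 0 F) as [|HF]; auto. exfalso.
    set (e := - F / (2 * (Rabs b + 1))).
    assert (Hb1 : 0 < Rabs b + 1) by (pose proof (Rabs_pos b); lra).
    assert (He : 0 < e) by (unfold e; apply Rdiv_lt_0_compat; lra).
    assert (Hee : e * (Rabs b + 1) = - F / 2) by (unfold e; field; lra).
    assert (e * b <= e * Rabs b) by (apply Rmult_le_compat_l; [lra| apply Rle_abs]).
    specialize (Heps e He). nra. Qed.

Lemma cauchy_schwarz n b v :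
  rsum n (fun j => b j * v j) * rsum n (fun j => b j * v j) <=
  rsum n (fun j => b j * b j) * rsum n (fun j => v j * v j).
Proof. induction n; simpl; [lra|].
  set (S0 := rsum n (fun j => b j * v j)) in *.
  set (B := rsum n (fun j => b j * b j)) in *.
  set (V := rsum n (fun j => v j * v j)) in *.
  assert (HB : 0 <= B) by (apply rsum_nonneg; intros; nra).
  assert (HV : 0 <= V) by (apply rsum_nonneg; intros; nra).
  set (x := b n) in *. set (y := v n) in *.
  assert (H1 : (2 * S0 * x * y) * (2 * S0 * x * y) <= (B * y * y + x * x * V) * (B * y * y + x * x * V)).
  { clearbody S0 B V x y.
    pose proof (Rle_0_sqr (B * y * y - x * x * V)) as Hq. unfold Rsqr in Hq.
    assert (0 <= 4 * (x * x * y * y) * (B * V - S0 * S0)).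
    { apply Rmult_le_pos; [|lra]. pose proof (Rle_0_sqr (x*y)). unfold Rsqr in *. nra. }
    nra. }
  assert (H2 : 2 * S0 * x * y <= B * y * y + x * x * V).
  { assert (0 <= B * y * y + x * x * V) by nra.
    destruct (Rle_or_lt (2 * S0 * x * y) (B * y * y + x * x * V)); auto. nra. }
  nra. Qed.

Lemma Rabs_le_between' x b : Rabs x <= b -> -b <= x <= b.
Proof. intros H. pose proof (Rle_abs x). pose proof (Rle_abs (-x)). rewrite Rabs_Ropp in H1. lra. Qed.

Lemma sq_ineq y z : (y - z) * (y - z) <= 2 * (y * y) + 2 * (z * z).
Proof. pose proof (Rle_0_sqr (y + z)) as H. unfold Rsqr in H. nra. Qed.

Lemma pd_bound n : forall A, pd n A -> exists c, 0 < c /\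
  forall v, c * rsum n (fun i => v i * v i) <= quadf n A v.
Proof. induction n; intros A [Hs Hp].
  - exists 1. split; [lra|]. intros v. unfold quadf. simpl. lra.
  - set (a := A n n).
    assert (Ha : 0 < a).
    { specialize (Hp (fun i => if Nat.eqb i n then 1 else 0)).
      assert (Hpre : exists i, (i < S n)%nat /\ (fun i => if Nat.eqb i n then 1 else 0) i <> 0).
      { exists n. split; [lia|]. simpl. rewrite Nat.eqb_refl. lra. }
      specialize (Hp Hpre). clear Hpre.
      rewrite quadf_S in Hp. rewrite Nat.eqb_refl in Hp.
      rewrite (quadf_extv n A _ (fun _ => 0)) in Hp.
      rewrite quadf_zero_v in Hp.
      rewrite (rsum_zero n (fun i => (if Nat.eqb i n then 1 else 0) * A i n * 1)) in Hp.
      rewrite (rsum_zero n (fun j => 1 * A n j * (if Nat.eqb j n then 1 else 0))) in Hp.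
      unfold a; lra.
      all: try (intros i Hi; assert (Hne : i <> n) by lia; apply Nat.eqb_neq in Hne; rewrite Hne; ring). }
    assert (Hpd' : pd n (schur A n)).
    { split. apply schur_symm; auto.
      intros v [i0 [Hi0 Hv0]]. set (s := rsum n (fun j => A n j * v j)).
      set (w := fun i => if (i <? n)%nat then v i else - s / A n n).
      assert (Hwn : w n = - s / A n n) by (unfold w; rewrite Nat.ltb_irrefl; reflexivity).
      assert (Hwv : forall i, (i < n)%nat -> w i = v i).
      { intros i Hi. unfold w. apply Nat.ltb_lt in Hi. rewrite Hi. reflexivity. }
      specialize (Hp w). rewrite quadf_S_symm in Hp by auto.
      rewrite (quadf_extv n A w v Hwv) in Hp.
      rewrite (rsum_ext n (fun j => A n j * w j) (fun j => A n j * v j)) in Hp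
        by (intros; rewrite Hwv; auto).
      rewrite quadf_schur. fold s. fold s in Hp. rewrite Hwn in Hp.
      assert (HH: 2 * (- s / A n n) * s + A n n * (- s / A n n) * (- s / A n n) = - / A n n * (s * s))
        by (unfold a in Ha; field; lra).
      assert (0 < quadf n A v + 2 * (- s / A n n) * s + A n n * (- s / A n n) * (- s / A n n)).
      { apply Hp. exists i0. split; [lia|]. rewrite Hwv; auto. }
      lra. }
    destruct (IHn _ Hpd') as [c' [Hc' Hb']].
    set (K := rsum n (fun j => A n j * A n j)).
    assert (HK : 0 <= K) by (apply rsum_nonneg; intros; nra).
    set (M := 1 + 2 * K / (a * a)).
    assert (HM : 1 <= M) by (unfold M; assert (0 <= 2 * K / (a * a)) by
      (apply Rmult_le_pos; [lra| left; apply Rinv_0_lt_compat; nra]); lra).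
    exists (Rmin (a / 2) (c' / M)). split.
    { apply Rmin_pos; [lra| apply Rdiv_lt_0_compat; lra]. }
    intros v. set (c := Rmin (a / 2) (c' / M)).
    assert (Hc1 : c <= a / 2) by apply Rmin_l.
    assert (Hc2 : c * M <= c') by (assert (c <= c' / M) by apply Rmin_r;
      apply (Rmult_le_compat_r M) in H; [|lra]; unfold Rdiv in H;
      rewrite Rmult_assoc, Rinv_l in H; lra).
    assert (Hc0 : 0 < c) by (apply Rmin_pos; [lra| apply Rdiv_lt_0_compat; lra]).
    set (s := rsum n (fun j => A n j * v j)).
    set (S' := rsum n (fun i => v i * v i)).
    assert (HS' : 0 <= S') by (apply rsum_nonneg; intros; nra).
    assert (Hcs : s * s <= K * S') by apply cauchy_schwarz.
    specialize (Hb' v). rewrite quadf_schur in Hb'. fold s in Hb'. fold S' in Hb'.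
    rewrite quadf_S_symm by auto. fold s. simpl. fold S'. fold a in Hb' |- *.
    set (y := v n + s / a).
    assert (Hq : quadf n A v + 2 * v n * s + a * v n * v n =
       (quadf n A v + - / a * (s * s)) + a * (y * y)) by (unfold y; field; lra).
    assert (Hvn : v n * v n <= 2 * (y * y) + 2 * (K * S') / (a * a)).
    { assert (v n = y - s / a) by (unfold y; field; lra).
      assert (v n * v n <= 2 * (y * y) + 2 * ((s / a) * (s / a))) by (rewrite H; apply sq_ineq).
      assert ((s / a) * (s / a) = s * s / (a * a)) by (field; lra).
      assert (s * s / (a * a) <= K * S' / (a * a)).
      { apply Rmult_le_compat_r; [left; apply Rinv_0_lt_compat; nra| auto]. }
      lra. }
    assert (Hsum : S' + v n * v n <= 2 * (y * y) + M * S').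
    { unfold M. assert (2 * (K * S') / (a * a) = 2 * K / (a * a) * S') by (field; lra). lra. }
    assert (c * (S' + v n * v n) <= c * (2 * (y * y) + M * S')) by (apply Rmult_le_compat_l; lra).
    assert (0 <= y * y) by nra.
    nra. Qed.

Lemma quadf_abs_bound n B v :
  Rabs (quadf n B v) <= rsum n (fun i => rsum n (fun j => Rabs (B i j))) * rsum n (fun i => v i * v i).
Proof. set (S0 := rsum n (fun i => v i * v i)).
  assert (Hterm : forall i, (i < n)%nat -> v i * v i <= S0).
  { intros. apply (rsum_ge_term n (fun i => v i * v i)); auto. intros; nra. }
  assert (Ht : forall i j, (i<n)%nat -> (j<n)%nat -> Rabs (v i * B i j * v j) <= Rabs (B i j) * S0).
  { intros i j Hi Hj. specialize (Hterm i Hi) as H1. specialize (Hterm j Hj) as H2.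
    replace (v i * B i j * v j) with (B i j * (v i * v j)) by ring.
    rewrite Rabs_mult. apply Rmult_le_compat_l. apply Rabs_pos.
    apply Rabs_le. split; nra. }
  rewrite Rmult_comm, <- rsum_scal.
  apply Rabs_le. split.
  - rewrite <- rsum_opp. unfold quadf. apply rsum_le. intros i Hi.
    rewrite <- rsum_scal, <- rsum_opp. apply rsum_le. intros j Hj.
    specialize (Ht i j Hi Hj). apply Rabs_le_between' in Ht. lra.
  - unfold quadf. apply rsum_le. intros i Hi.
    rewrite <- rsum_scal. apply rsum_le. intros j Hj.
    specialize (Ht i j Hi Hj). apply Rabs_le_between' in Ht. lra. Qed.

Lemma pd_perturb n A B : pd n A -> exists e, 0 < e /\
  forall t v, Rabs t <= e -> 0 <= quadf n A v + t * quadf n B v.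
Proof. intros HA. destruct (pd_bound n A HA) as [c [Hc Hb]].
  set (K := rsum n (fun i => rsum n (fun j => Rabs (B i j)))).
  assert (HK : 0 <= K) by (apply rsum_nonneg; intros; apply rsum_nonneg; intros; apply Rabs_pos).
  exists (c / (K + 1)). split. apply Rdiv_lt_0_compat; lra.
  intros t v Ht. specialize (Hb v). set (S0 := rsum n (fun i => v i * v i)) in *.
  assert (HS : 0 <= S0) by (apply rsum_nonneg; intros; nra).
  pose proof (quadf_abs_bound n B v) as HB. fold K S0 in HB.
  assert (Rabs (t * quadf n B v) <= c / (K + 1) * (K * S0)).
  { rewrite Rabs_mult. apply Rmult_le_compat; auto; apply Rabs_pos. }
  assert (c / (K + 1) * (K * S0) <= c * S0).
  { assert (c / (K+1) * K <= c).
    { apply (Rmult_le_reg_r (K+1)); [lra|]. field_simplify; [|lra]. nra. }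
    nra. }
  apply Rabs_le_between' in H. lra. Qed.

Lemma frob_minus2 n A X Y : frob n A (fun k l => X k l - Y k l) = frob n A X - frob n A Y.
Proof. unfold frob. unfold Rminus at 2. rewrite <- rsum_opp, <- rsum_plus. apply rsum_ext; intros.
  rewrite <- rsum_opp, <- rsum_plus. apply rsum_ext; intros. ring. Qed.

Lemma frob_QY P i x X : frob (dimN P + 1) (Qmat P i) (Ymat x X) =
  qf P i x + frob (dimN P) (Am P i) (fun k l => X k l - x k * x l).
Proof. rewrite Nat.add_1_r, frob_shift. unfold Qmat, Ymat. cbn beta iota.
  rewrite frob_minus2.
  assert (frob (dimN P) (Am P i) (fun k l => x k * x l) = quadf (dimN P) (Am P i) x).
  { unfold frob, quadf. apply rsum_ext; intros. apply rsum_ext; intros. ring. }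
  rewrite H. unfold qf. cbv zeta.
  assert (frob (dimN P) (fun k l => Am P i k l) (fun k l => X k l) = frob (dimN P) (Am P i) X) by reflexivity.
  rewrite H0. lra. Qed.

Lemma schur_Y P x X : sdp_feasible P x X -> psd (dimN P) (fun k l => X k l - x k * x l).
Proof. intros [HsX [[HsY HqY] _]]. split.
  - intros r s Hr Hs. rewrite HsX by auto. ring.
  - intros v. set (s := rsum (dimN P) (fun l => x l * v l)).
    set (w := fun r => match r with O => - s | S k => v k end).
    specialize (HqY w). rewrite Nat.add_1_r, quadf_shift in HqY.
    unfold Ymat in HqY. simpl in HqY.
    rewrite (rsum_ext _ (fun l => - s * x l * v l) (fun l => (- s) * (x l * v l))) in HqY by (intros; ring).
    rewrite (rsum_ext _ (fun k => v k * x k * - s) (fun k => (- s) * (x k * v k))) in HqY by (intros; ring).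
    rewrite rsum_scal in HqY. fold s in HqY.
    assert (quadf (dimN P) (fun k l => X k l - x k * x l) v = quadf (dimN P) (fun k l => X k l) v - s * s).
    { unfold quadf, s. rewrite <- rsum_prod. unfold Rminus at 2.
      rewrite <- rsum_opp, <- rsum_plus. apply rsum_ext; intros.
      rewrite <- rsum_opp, <- rsum_plus. apply rsum_ext; intros. ring. }
    rewrite H. change (fun k : nat => v k) with v in HqY. nra. Qed.

Lemma frob_Amat P g Z : frob (dimN P) (Amat P g) Z =
  frob (dimN P) (Am P 0) Z + rsum1 (mm P) (fun i => g i * frob (dimN P) (Am P i) Z).
Proof. unfold Amat, frob, rsum1.
  assert (H : rsum (mm P) (fun i => g (S i) * rsum (dimN P) (fun r => rsum (dimN P) (fun s => Am P (S i) r s * Z r s)))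
    = rsum (dimN P) (fun r => rsum (dimN P) (fun s => rsum (mm P) (fun i => g (S i) * Am P (S i) r s) * Z r s))).
  { rewrite (rsum_ext (mm P) _ (fun i => rsum (dimN P) (fun r => rsum (dimN P) (fun s => g (S i) * Am P (S i) r s * Z r s)))).
    2:{ intros; rewrite <- rsum_scal; apply rsum_ext; intros; rewrite <- rsum_scal; apply rsum_ext; intros; ring. }
    rewrite rsum_comm. apply rsum_ext; intros. rewrite rsum_comm. apply rsum_ext; intros.
    rewrite Rmult_comm, <- rsum_scal. apply rsum_ext; intros. ring. }
  rewrite H. rewrite <- rsum_plus. apply rsum_ext; intros.
  rewrite <- rsum_plus. apply rsum_ext; intros. ring. Qed.

Lemma weak_duality P x t g : inDSDP P x t -> inGamma P g -> qg P g x <= 2 * t.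
Proof. intros [X [Hf Hobj]] [HpA Hg]. pose proof (schur_Y P x X Hf) as HZ.
  destruct Hf as [_ [_ [Hin Heq]]]. cbv zeta in *.
  set (Z := fun k l => X k l - x k * x l) in *.
  pose proof (fejer _ _ _ HpA HZ) as HF.
  rewrite frob_Amat in HF.
  rewrite frob_QY in Hobj. fold Z in Hobj.
  assert (Hsum : rsum1 (mm P) (fun i => g i * (qf P i x + frob (dimN P) (Am P i) Z)) <= 0).
  { unfold rsum1. rewrite <- (rsum_zero (mm P) (fun _ => 0)) by auto. apply rsum_le. intros i Hi.
    replace (qf P (S i) x + frob (dimN P) (Am P (S i)) Z) with (frob (dimN P + 1) (Qmat P (S i)) (Ymat x X)) by (rewrite frob_QY; reflexivity).
    destruct (Compare_dec.le_lt_dec (S i) (mI P)).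
    - assert (0 <= g (S i)) by (apply Hg; lia).
      assert (frob (dimN P + 1) (Qmat P (S i)) (Ymat x X) <= 0) by (apply Hin; lia). nra.
    - rewrite Heq. lra. unfold mm in *. lia. }
  unfold qg. unfold rsum1 in *.
  rewrite (rsum_ext _ _ (fun i => g (S i) * qf P (S i) x + g (S i) * frob (dimN P) (Am P (S i)) Z)) in Hsum by (intros; ring).
  rewrite rsum_plus in Hsum. lra. Qed.

Lemma psd_ext n M M' : psd n M -> (forall r s, (r<n)%nat -> (s<n)%nat -> M r s = M' r s) -> psd n M'.
Proof. intros [Hs Hq] H. split.
  - intros r s Hr Hs'. rewrite <- !H by auto. apply Hs; auto.
  - intros v. rewrite <- (quadf_ext n M M'); auto. Qed.

Lemma feas_sdp P x : feasible P x ->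
  sdp_feasible P x (fun k l => x k * x l) /\
  frob (dimN P + 1) (Qmat P 0) (Ymat x (fun k l => x k * x l)) = qf P 0 x.
Proof. intros [Hin Heq].
  assert (Hf : forall i, frob (dimN P + 1) (Qmat P i) (Ymat x (fun k l => x k * x l)) = qf P i x).
  { intros i. rewrite frob_QY. rewrite (frob_ext _ _ (Am P i) _ (fun _ _ => 0)).
    - unfold frob. rewrite rsum_zero. lra. intros. apply rsum_zero. intros. ring.
    - intros. split; auto. ring. }
  split; [|apply Hf]. unfold sdp_feasible. cbv zeta. split; [|split; [|split]].
  - intros r s _ _. ring.
  - split.
    + intros r s _ _. destruct r, s; simpl; ring.
    + intros w. rewrite Nat.add_1_r, quadf_shift. unfold Ymat. simpl.
      set (s := rsum (dimN P) (fun l => x l * w (S l))).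
      rewrite (rsum_ext _ (fun l => w 0%nat * x l * w (S l)) (fun l => w 0%nat * (x l * w (S l)))) by (intros; ring).
      rewrite (rsum_ext _ (fun k => w (S k) * x k * w 0%nat) (fun k => w 0%nat * (x k * w (S k)))) by (intros; ring).
      rewrite rsum_scal. fold s.
      assert (quadf (dimN P) (fun k l => x k * x l) (fun k => w (S k)) = s * s).
      { unfold s. rewrite <- rsum_prod. unfold quadf. apply rsum_ext; intros. apply rsum_ext; intros. ring. }
      rewrite H. clearbody s. pose proof (Rle_0_sqr (w 0%nat + s)). unfold Rsqr in *. nra.
  - intros i Hi. rewrite Hf. apply Hin. auto.
  - intros i Hi. rewrite Hf. apply Heq. auto. Qed.

Lemma lsum_nil {A} (f : A -> R) : lsum f nil = 0.
Proof. reflexivity. Qed.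
Lemma lsum_cons {A} (f : A -> R) a l : lsum f (a :: l) = f a + lsum f l.
Proof. reflexivity. Qed.

Lemma conv_aux P L : Forall (fun a => 0 <= fst a /\ inDSDP P (fst (snd a)) (snd (snd a))) L ->
  exists Z : mat, psd (dimN P + 1) Z /\
   (forall i, (1 <= i <= mI P)%nat -> frob (dimN P + 1) (Qmat P i) Z <= 0) /\
   (forall i, (mI P + 1 <= i <= mm P)%nat -> frob (dimN P + 1) (Qmat P i) Z = 0) /\
   frob (dimN P + 1) (Qmat P 0) Z <= 2 * lsum (fun a => fst a * snd (snd a)) L /\
   Z 0%nat 0%nat = lsum (fun a => fst a) L /\
   (forall l, Z 0%nat (S l) = lsum (fun a => fst a * fst (snd a) l) L) /\
   (forall k, Z (S k) 0%nat = lsum (fun a => fst a * fst (snd a) k) L).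
Proof. induction L as [|[lam [xa ta]] L IH]; intros HF.
  - exists (fun _ _ => 0).
    assert (Hz : forall i, frob (dimN P + 1) (Qmat P i) (fun _ _ => 0) = 0).
    { intros. unfold frob. apply rsum_zero; intros; apply rsum_zero; intros; ring. }
    split; [|split; [|split; [|split; [|split; [|split]]]]]; simpl; intros; try rewrite Hz; try lra.
    split. intros r s _ _. reflexivity. intros v. unfold quadf. rewrite rsum_zero. lra.
    intros; apply rsum_zero; intros; ring.
  - inversion HF as [|? ? [Hl [X [Hf Hobj]]] HF']; subst. simpl in Hl, Hf, Hobj.
    destruct (IH HF') as [Z [HpZ [Hin [Heq [Hob [H00 [H0l Hk0]]]]]]].
    destruct Hf as [HsX [HpY [HinY HeqY]]]. cbv zeta in *.
    exists (fun r s => lam * Ymat xa X r s + Z r s).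
    split; [|split; [|split; [|split; [|split; [|split]]]]].
    + destruct HpZ as [HsZ HqZ]. destruct HpY as [HsY HqY]. split.
      * intros r s Hr Hs. rewrite HsZ, HsY by auto. reflexivity.
      * intros v. rewrite (quadf_ext _ _ (fun r s => Z r s + lam * Ymat xa X r s)) by (intros; ring).
        rewrite quadf_lin. specialize (HqZ v). specialize (HqY v). nra.
    + intros i Hi. rewrite frob_lin2. specialize (Hin i Hi). specialize (HinY i Hi). nra.
    + intros i Hi. rewrite frob_lin2. rewrite Heq, HeqY by auto. ring.
    + rewrite frob_lin2. simpl. nra.
    + simpl. rewrite H00. ring.
    + intros l. simpl. rewrite H0l. ring.
    + intros k. simpl. rewrite Hk0. ring. Qed.

Lemma inDSDP_conv P x t : in_conv (dimN P) (inDSDP P) x t -> inDSDP P x t.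
Proof. intros [L [HF [H1 [Hx Ht]]]].
  destruct (conv_aux P L) as [Z [HpZ [Hin [Heq [Hob [H00 [H0l Hk0]]]]]]].
  { eapply Forall_impl; [|exact HF]. simpl. tauto. }
  set (X := fun k l => Z (S k) (S l)).
  assert (Hag : forall r s, (r < dimN P + 1)%nat -> (s < dimN P + 1)%nat -> Z r s = Ymat x X r s).
  { intros r s Hr Hs. destruct r, s; simpl.
    - rewrite H00; auto.
    - rewrite H0l, Hx; auto. lia.
    - rewrite Hk0, Hx; auto. lia.
    - reflexivity. }
  exists X. split.
  - unfold sdp_feasible. cbv zeta. split; [|split; [|split]].
    + intros r s Hr Hs. unfold X. destruct HpZ as [HsZ _]. apply HsZ; lia.
    + eapply psd_ext; eauto.
    + intros i Hi. rewrite <- (frob_ext _ (Qmat P i) _ Z). apply Hin; auto. intros; split; auto.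
    + intros i Hi. rewrite <- (frob_ext _ (Qmat P i) _ Z). apply Heq; auto. intros; split; auto.
  - rewrite <- (frob_ext _ (Qmat P 0) _ Z). rewrite Ht. auto. intros; split; auto. Qed.

(* ---------- KKT: definite face gives a point of D ---------- *)
Definition gupd (g : vec) (i : nat) (t : R) : vec := fun k => if Nat.eqb k i then g k + t else g k.

Lemma rsum1_upd m g i t h : (1 <= i <= m)%nat ->
  rsum1 m (fun k => gupd g i t k * h k) = rsum1 m (fun k => g k * h k) + t * h i.
Proof. intros Hi. unfold rsum1. apply (rsum_update _ _ _ (i - 1)); [lia| |].
  - intros k Hk Hne. unfold gupd. assert (S k <> i) by lia. apply Nat.eqb_neq in H. rewrite H. reflexivity.
  - replace (S (i - 1)) with i by lia. unfold gupd. rewrite Nat.eqb_refl. ring. Qed.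

Lemma Amat_upd P g i t r s : (1 <= i <= mm P)%nat ->
  Amat P (gupd g i t) r s = Amat P g r s + t * Am P i r s.
Proof. intros Hi. unfold Amat. rewrite (rsum1_upd _ g i t (fun k => Am P k r s)) by auto. ring. Qed.

Lemma qg_upd P g i t x : (1 <= i <= mm P)%nat -> qg P (gupd g i t) x = qg P g x + t * qf P i x.
Proof. intros Hi. unfold qg. rewrite (rsum1_upd _ g i t (fun k => qf P k x)) by auto. ring. Qed.

Lemma Amat_symm P g : (forall i, (i <= mm P)%nat -> symm (dimN P) (Am P i)) -> symm (dimN P) (Amat P g).
Proof. intros H r s Hr Hs. unfold Amat. rewrite (H 0%nat) by (lia||auto). f_equal.
  unfold rsum1. apply rsum_ext. intros. rewrite (H (S i)); auto; lia. Qed.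

Lemma definite_inD P x t g : (forall i, (i <= mm P)%nat -> symm (dimN P) (Am P i)) ->
  inDSDP P x t -> inF P x g -> pd (dimN P) (Amat P g) -> inD P x t.
Proof. intros Hsym HD [[HpA Hg] Hmax] Hpd.
  assert (Hm : forall i, (1 <= i <= mm P)%nat -> exists e, 0 < e /\ forall t0, Rabs t0 <= e ->
     ((i <= mI P)%nat -> 0 <= g i + t0) -> t0 * qf P i x <= 0).
  { intros i Hi. destruct (pd_perturb _ _ (Am P i) Hpd) as [e [He Hp]].
    exists e. split; auto. intros t0 Ht0 Hsg.
    assert (Hin : inGamma P (gupd g i t0)).
    { split.
      - split. apply Amat_symm; auto.
        intros v. rewrite (quadf_ext _ _ (fun r s => Amat P g r s + t0 * Am P i r s)) by (intros; apply Amat_upd; auto).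
        rewrite quadf_lin. apply Hp; auto.
      - intros k Hk. unfold gupd. destruct (Nat.eqb_spec k i).
        + subst. apply Hsg; lia.
        + apply Hg; auto. }
    specialize (Hmax _ Hin). rewrite qg_upd in Hmax by auto. lra. }
  assert (Hq : forall i, (1 <= i <= mm P)%nat ->
     ((i <= mI P)%nat -> qf P i x <= 0) /\ ((mI P < i)%nat -> qf P i x = 0) /\ g i * qf P i x = 0).
  { intros i Hi. destruct (Hm i Hi) as [e [He H]].
    assert (H1 : e * qf P i x <= 0).
    { apply H. rewrite Rabs_pos_eq; lra. intros. assert (0 <= g i) by (apply Hg; lia). lra. }
    assert (Hle : qf P i x <= 0) by nra.
    destruct (Compare_dec.le_lt_dec i (mI P)).
    - split; auto. split; [intros; lia|].
      assert (0 <= g i) by (apply Hg; lia).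
      destruct (Req_dec (g i) 0) as [Hz|Hnz]. rewrite Hz; ring.
      set (mn := Rmin e (g i)).
      assert (Hmn : 0 < mn) by (apply Rmin_pos; lra).
      assert (- mn * qf P i x <= 0).
      { apply H. rewrite Rabs_Ropp, Rabs_pos_eq by lra. apply Rmin_l.
        intros. pose proof (Rmin_r e (g i)). fold mn in H3. lra. }
      assert (qf P i x = 0) by nra. rewrite H3. ring.
    - assert (- e * qf P i x <= 0).
      { apply H. rewrite Rabs_Ropp, Rabs_pos_eq; lra. intros; lia. }
      assert (qf P i x = 0) by nra. split; [intros; lia|]. split; auto. rewrite H2; ring. }
  split.
  - assert (qg P g x = qf P 0 x).
    { unfold qg, rsum1. rewrite (rsum_zero (mm P) (fun i => g (S i) * qf P (S i) x)). lra.
      intros. apply Hq. lia. }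
    rewrite <- H. apply weak_duality; auto. split; auto.
  - split.
    + intros i Hi. apply Hq; auto; unfold mm; lia.
    + intros i Hi. apply Hq. unfold mm in *. lia. lia. Qed.

Lemma dep_last m d' (w : nat -> vec)
  (IH : forall d (w : nat -> vec), (m < d)%nat -> exists l : nat -> R,
     (forall j, (j < m)%nat -> rsum d (fun k => l k * w k j) = 0) /\ exists k, (k < d)%nat /\ l k <> 0) :
  (m < d')%nat -> w d' m <> 0 -> exists l : nat -> R,
     (forall j, (j < S m)%nat -> rsum (S d') (fun k => l k * w k j) = 0) /\ exists k, (k < S d')%nat /\ l k <> 0.
Proof. intros Hd Hw.
  set (u := fun k j => w k j - (w k m / w d' m) * w d' j).
  destruct (IH d' u Hd) as [l' [Hl' [k0 [Hk0 Hl0]]]].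
  set (R0 := rsum d' (fun k => l' k * w k m)).
  exists (fun k => if (k <? d')%nat then l' k else - R0 / w d' m). split.
  - intros j Hj. simpl. rewrite Nat.ltb_irrefl.
    rewrite (rsum_ext d' _ (fun k => l' k * w k j)).
    2:{ intros k Hk. apply Nat.ltb_lt in Hk. rewrite Hk. reflexivity. }
    assert (Hu : rsum d' (fun k => l' k * u k j) = 0).
    { destruct (Nat.eq_dec j m).
      - subst. apply rsum_zero. intros. unfold u. field_simplify; auto. 
      - apply Hl'. lia. }
    unfold u in Hu.
    rewrite (rsum_ext d' _ (fun k => l' k * w k j + (- (w d' j / w d' m)) * (l' k * w k m))) in Hu.
    2:{ intros. field. auto. }
    rewrite rsum_plus, rsum_scal in Hu. fold R0 in Hu.
    assert (- R0 / w d' m * w d' j = - (w d' j / w d' m) * R0) by (field; auto). lra.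
  - exists k0. split; [lia|]. apply Nat.ltb_lt in Hk0 as Hk. rewrite Hk. auto. Qed.

Lemma dep m : forall d (w : nat -> vec), (m < d)%nat -> exists l : nat -> R,
  (forall j, (j < m)%nat -> rsum d (fun k => l k * w k j) = 0) /\ exists k, (k < d)%nat /\ l k <> 0.
Proof. induction m; intros d w Hd.
  - exists (fun _ => 1). split. intros; lia. exists 0%nat. split; [lia|lra].
  - destruct d as [|d']; [lia|].
    destruct (classic (exists p, (p < S d')%nat /\ w p m <> 0)) as [[p [Hp Hwp]]|Hno].
    + destruct (Req_dec (w d' m) 0) as [Hz|Hnz].
      2:{ apply dep_last; auto. lia. }
      assert (Hpd : p <> d') by (intro; subst; contradiction).
      set (w2 := fun k => if Nat.eqb k d' then (fun j => w d' j + w p j) else w k).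
      assert (Hw2 : w2 d' m <> 0) by (unfold w2; rewrite Nat.eqb_refl; lra).
      destruct (dep_last m d' w2 IHm ltac:(lia) Hw2) as [l2 [Hl2 [k0 [Hk0 Hl0]]]].
      exists (fun k => if Nat.eqb k p then l2 p + l2 d' else l2 k). split.
      * intros j Hj. specialize (Hl2 j Hj). simpl in Hl2 |- *.
        assert (Hne : Nat.eqb d' p = false) by (apply Nat.eqb_neq; auto).
        rewrite Hne.
        assert (Hup : rsum d' (fun k => (if Nat.eqb k p then l2 p + l2 d' else l2 k) * w k j)
            = rsum d' (fun k => l2 k * w k j) + l2 d' * w p j).
        { apply (rsum_update _ _ _ p). lia.
          intros k Hk Hkp; apply Nat.eqb_neq in Hkp; rewrite Hkp; reflexivity.
          simpl. rewrite Nat.eqb_refl; ring. }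
        rewrite Hup.
        unfold w2 in Hl2. rewrite Nat.eqb_refl in Hl2.
        rewrite (rsum_ext d' (fun k => l2 k * (if Nat.eqb k d' then fun j0 => w d' j0 + w p j0 else w k) j)
                  (fun k => l2 k * w k j)) in Hl2.
        2:{ intros k Hk. assert (k <> d') by lia. apply Nat.eqb_neq in H. rewrite H. reflexivity. }
        lra.
      * destruct (Req_dec (l2 d') 0) as [Hz2|Hnz2].
        -- exists k0. split; auto. destruct (Nat.eqb_spec k0 p).
           ++ subst. lra.
           ++ auto.
        -- exists d'. split; [lia|]. assert (Hne : Nat.eqb d' p = false) by (apply Nat.eqb_neq; auto).
           rewrite Hne. auto.
    + destruct (IHm (S d') w ltac:(lia)) as [l [Hl Hk]].
      exists l. split; auto. intros j Hj. destruct (Nat.eq_dec j m).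
      * subst. apply rsum_zero. intros k Hk'.
        destruct (Req_dec (w k m) 0) as [Hz|Hnz]. rewrite Hz; ring.
        exfalso. apply Hno. exists k. auto.
      * apply Hl. lia. Qed.

Lemma has_bound m S0 d : has_aff_indep m S0 d -> (d <= m)%nat.
Proof. intros [p0 [ps [Hlen [_ [_ Hai]]]]].
  destruct (Compare_dec.le_lt_dec d m); auto. exfalso.
  destruct (dep m d (fun k j => nth k ps p0 (S j) - p0 (S j)) l) as [lam [Hl [k [Hk Hlk]]]].
  apply Hlk. apply (Hai lam); [|lia].
  intros j Hj. rewrite Hlen. destruct j as [|j']; [lia|]. apply (Hl j'). lia. Qed.

Lemma has_mono m S0 d : has_aff_indep m S0 (S d) -> has_aff_indep m S0 d.
Proof. intros [p0 [ps [Hlen [Hp0 [HF Hai]]]]].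
  exists p0, (firstn d ps). split; [apply firstn_length_le; lia|]. split; auto. split.
  - rewrite <- (firstn_skipn d ps) in HF. apply Forall_app in HF. tauto.
  - intros l Hl k Hk.
    rewrite firstn_length_le in Hk, Hl by lia.
    set (l' := fun k => if (k <? d)%nat then l k else 0).
    assert (Hl' : forall k, (k < length ps)%nat -> l' k = 0).
    { apply Hai. intros j Hj. rewrite Hlen. cbn [rsum].
      assert (l' d = 0) by (unfold l'; rewrite Nat.ltb_irrefl; reflexivity). rewrite H.
      rewrite Rmult_0_l, Rplus_0_r. etransitivity; [|apply (Hl j Hj)]. apply rsum_ext. intros i Hi.
      unfold l'. apply Nat.ltb_lt in Hi as Hi'. rewrite Hi'. rewrite nth_firstn. rewrite Hi'. reflexivity. }
    specialize (Hl' k ltac:(lia)). unfold l' in Hl'. apply Nat.ltb_lt in Hk as Hk'. rewrite Hk' in Hl'. auto. Qed.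

Lemma has_down m S0 k : forall d, has_aff_indep m S0 (k + d) -> has_aff_indep m S0 d.
Proof. induction k; intros d H; simpl in H; auto. apply IHk. apply has_mono. auto. Qed.

Lemma AffDim_le m S0 d1 d : AffDim m S0 d1 -> AffDim m S0 d -> (d1 <= d)%nat.
Proof. intros [H1 _] [_ H2]. destruct (Compare_dec.le_lt_dec d1 d); auto. exfalso. apply H2.
  apply (has_down m S0 (d1 - S d)). replace (d1 - S d + S d)%nat with d1 by lia. auto. Qed.

Lemma lsum_ext {A} (f g : A -> R) l : (forall a, f a = g a) -> lsum f l = lsum g l.
Proof. intros H. induction l; simpl; auto. rewrite H, IHl. reflexivity. Qed.
Lemma lsum_app {A} (f : A -> R) l1 l2 : lsum f (l1 ++ l2) = lsum f l1 + lsum f l2.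
Proof. induction l1; simpl. unfold lsum; simpl; lra. unfold lsum in *; simpl. rewrite IHl1. lra. Qed.
Lemma lsum_map {A B} (f : B -> R) (h : A -> B) l : lsum f (map h l) = lsum (fun a => f (h a)) l.
Proof. induction l; simpl; auto. unfold lsum in *; simpl. rewrite IHl. reflexivity. Qed.
Lemma lsum_scal {A} (f : A -> R) c l : lsum (fun a => c * f a) l = c * lsum f l.
Proof. induction l; unfold lsum in *; simpl. lra. rewrite IHl. lra. Qed.
Lemma lsum_le {A} (f g : A -> R) l : Forall (fun a => f a <= g a) l -> lsum f l <= lsum g l.
Proof. induction 1; unfold lsum in *; simpl. lra. lra. Qed.

Lemma flatten n (S' : vec -> R -> Prop) L :
  Forall (fun a => 0 <= fst a /\ in_conv n S' (fst (snd a)) (snd (snd a))) L ->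
  exists L', Forall (fun a => 0 <= fst a /\ S' (fst (snd a)) (snd (snd a))) L' /\
    lsum (fun a => fst a) L' = lsum (fun a => fst a) L /\
    (forall j, (j < n)%nat -> lsum (fun a => fst a * fst (snd a) j) L' = lsum (fun a => fst a * fst (snd a) j) L) /\
    lsum (fun a => fst a * snd (snd a)) L' = lsum (fun a => fst a * snd (snd a)) L.
Proof. induction 1 as [|[lam [xa ta]] L [Hl [La [HFa [H1a [Hxa Hta]]]]] HF IH].
  - exists nil. repeat split; auto.
  - destruct IH as [L' [HF' [H1' [Hx' Ht']]]]. simpl in *.
    exists (map (fun b => (lam * fst b, snd b)) La ++ L'). split; [|split; [|split]].
    + apply Forall_app. split; auto. apply Forall_map. eapply Forall_impl; [|exact HFa].
      simpl. intros a [Ha HSa]. split; auto. nra.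
    + rewrite lsum_app, lsum_map; try rewrite lsum_cons; simpl. rewrite lsum_scal. assert (E1 : lsum fst La = 1) by exact H1a. rewrite E1, H1'. ring.
    + intros j Hj. rewrite lsum_app, lsum_map; try rewrite lsum_cons; simpl.
      rewrite (lsum_ext (fun a : R * (vec * R) => lam * fst a * fst (snd a) j) (fun a => lam * (fst a * fst (snd a) j))) by (intros; simpl; ring).
      rewrite lsum_scal, <- Hxa, Hx' by auto. reflexivity.
    + rewrite lsum_app, lsum_map; try rewrite lsum_cons; simpl.
      rewrite (lsum_ext (fun a : R * (vec * R) => lam * fst a * snd (snd a)) (fun a => lam * (fst a * snd (snd a)))) by (intros; simpl; ring).
      rewrite lsum_scal, <- Hta, Ht'. reflexivity. Qed.

Lemma in_conv_flat n S' x t : in_conv n (fun x t => in_conv n S' x t) x t -> in_conv n S' x t.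
Proof. intros [L [HF [H1 [Hx Ht]]]]. destruct (flatten n S' L HF) as [L' [HF' [H1' [Hx' Ht']]]].
  exists L'. split; auto. split. rewrite H1'; auto. split.
  intros j Hj. rewrite Hx'; auto. rewrite Ht'; auto. Qed.

Lemma in_conv_single n (S' : vec -> R -> Prop) x t : S' x t -> in_conv n S' x t.
Proof. intros H. exists ((1, (x, t)) :: nil). repeat split.
  - constructor; [simpl; split; [lra|auto]| constructor].
  - unfold lsum; simpl; lra.
  - intros; unfold lsum; simpl; lra.
  - unfold lsum; simpl; lra. Qed.

Lemma in_conv_mono n (S1 S2 : vec -> R -> Prop) x t : (forall x t, S1 x t -> S2 x t) ->
  in_conv n S1 x t -> in_conv n S2 x t.
Proof. intros H [L [HF R1]]. exists L. split; auto. eapply Forall_impl; [|exact HF].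
  simpl. intros a [Ha Hb]. auto. Qed.

Lemma inD_inDSDP P x t : inD P x t -> inDSDP P x t.
Proof. intros [Hq Hf]. destruct (feas_sdp P x Hf) as [Hs Hobj].
  exists (fun k l => x k * x l). split; auto. cbv zeta. rewrite Hobj. auto. Qed.

(* ---------- main induction on the affine dimension ---------- *)
Lemma level P : (forall i, (i <= mm P)%nat -> symm (dimN P) (Am P i)) -> AssumptionB P ->
  (forall xh th, inDSDP P xh th -> semidef_face P xh ->
     in_conv (dimN P) (fun x t => inDSDP P x t /\ affdim_gt P x xh) xh th) ->
  forall k x t, inDSDP P x t -> (forall d, AffDim (mm P) (inF P x) d -> (mm P < d + k)%nat) ->
  in_conv (dimN P) (inD P) x t.
Proof. intros Hsym HB H4. induction k; intros x t HD Hk.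
  all: destruct (HB x) as [g0 Hg0]; [exists (2 * t); intros g Hg; apply weak_duality; auto|].
  all: destruct (classic (exists g, inF P x g /\ pd (dimN P) (Amat P g))) as [[g [HgF Hgpd]]|Hno];
    [apply in_conv_single; eapply definite_inD; eauto|].
  all: assert (Hsd : semidef_face P x) by (split; [exists g0; auto| intros g Hg Hpd; apply Hno; eauto]).
  all: destruct (H4 x t HD Hsd) as [L [HF [H1 [Hx Ht]]]].
  - destruct L as [|a L]. { unfold lsum in H1; simpl in H1. lra. }
    inversion HF as [|? ? [_ [_ [d1 [d2 [_ [Hd2 _]]]]]] _]; subst.
    specialize (Hk d2 Hd2). destruct Hd2 as [Hh _]. apply has_bound in Hh. lia.
  - apply in_conv_flat. exists L. split; auto.
    eapply Forall_impl; [|exact HF]. simpl. intros a [Ha [HDa [d1 [d2 [Hd1 [Hd2 Hlt]]]]]].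
    split; auto. apply IHk; auto. intros d Hd.
    specialize (Hk d2 Hd2). pose proof (AffDim_le _ _ _ _ Hd1 Hd). lia. Qed.

Lemma isinf_eq (S1 S2 : R -> Prop) : (forall s, S1 s -> S2 s) ->
  (forall r, (forall s, S1 s -> r <= s) -> forall s, S2 s -> r <= s) -> (exists s, S1 s) ->
  forall v, IsInf S1 v <-> IsInf S2 v.
Proof. intros Hsub Hlb [s0 Hs0] v. destruct v as [r| |]; simpl.
  - split.
    + intros [H1 H2]. split. apply Hlb; auto. intros r' Hr'. apply H2. intros s Hs. apply Hr'. auto.
    + intros [H1 H2]. split. intros s Hs. apply H1. auto. intros r' Hr'. apply H2. apply Hlb. auto.
  - split; intros H; exfalso. apply (H s0); auto. apply (H s0); auto.
  - split.
    + intros H r. destruct (H r) as [s [Hs Hsr]]. exists s. auto.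
    + intros H r. apply NNPP. intros Hn. destruct (H r) as [s [Hs Hsr]].
      assert (r <= s). { apply (Hlb r); auto. intros s' Hs'. apply Rnot_lt_le. intros Hlt. apply Hn. eauto. }
      lra. Qed.

Theorem mainTheorem4 (P : qcqp) :
  (1 <= dimN P)%nat -> (1 <= mm P)%nat ->
  (forall i, (i <= mm P)%nat -> symm (dimN P) (Am P i)) ->
  AssumptionA P -> AssumptionB P ->
  (forall xh th, inDSDP P xh th -> semidef_face P xh ->
     in_conv (dimN P) (fun x t => inDSDP P x t /\ affdim_gt P x xh) xh th) ->
  (forall x t, in_conv (dimN P) (inD P) x t <-> inDSDP P x t) /\
  (forall v, IsInf (OptSet P) v <-> IsInf (SDPSet P) v).
Proof. intros _ _ Hsym [[x0 Hx0] _] HB H4.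
  assert (Hconv : forall x t, in_conv (dimN P) (inD P) x t <-> inDSDP P x t).
  { intros x t. split.
    - intros H. apply inDSDP_conv. eapply in_conv_mono; [|exact H]. apply inD_inDSDP.
    - intros H. apply (level P Hsym HB H4 (S (mm P))); auto. intros; lia. }
  split; auto.
  apply isinf_eq.
  - intros s [x [Hf Hs]]. destruct (feas_sdp P x Hf) as [Hsd Hobj].
    exists x, (fun k l => x k * x l). split; auto. rewrite Hs. cbv zeta. rewrite Hobj. reflexivity.
  - intros r Hr s [x [X [Hf Hs]]].
    assert (HD : inDSDP P x (s / 2)).
    { exists X. split; auto. cbv zeta. rewrite <- Hs. lra. }
    apply Hconv in HD. destruct HD as [L [HF [H1 [_ Ht]]]].
    assert (lsum (fun a => fst a * (r / 2)) L <= lsum (fun a => fst a * snd (snd a)) L).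
    { apply lsum_le. eapply Forall_impl; [|exact HF]. simpl. intros a [Ha [Hq Hfa]].
      assert (r <= qf P 0 (fst (snd a))) by (apply Hr; exists (fst (snd a)); auto).
      apply Rmult_le_compat_l; auto. lra. }
    rewrite (lsum_ext _ (fun a => (r / 2) * fst a)) in H by (intros; simpl; ring).
    rewrite lsum_scal in H. assert (E1 : lsum fst L = 1) by exact H1. rewrite E1 in H. lra.
  - exists (qf P 0 x0). exists x0. auto. Qed.
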